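(* Let $M$ be the bounded distributive lattice of subsets of $\mathbb{N}$ that are either finite or equal to $\mathbb{N}$ (ordered by inclusion; this is a $\kappa$-frame for $\kappa=\aleph_0$). Then $M$ is d-reduced. Let $I=\{S\in M\mid 2\notin S\}$; then $I$ is an ideal of $M$, equal to the pseudocomplement $(\downarrow\{2\})^*$ in the lattice of ideals of $M$, and the quotient $M/\nabla_I$ has exactly three elements $[\emptyset]<[\{2\}]<[\mathbb{N}]$, so it is isomorphic to the three-element chain and is not d-reduced. Hence quotients of d-reduced $\kappa$-frames need not be d-reduced.
   Context: For $\kappa=\aleph_0$, $\kappa$-frames are bounded distributive lattices and $\kappa$-ideals are (nonempty) lattice ideals. A congruence is an equivalence relation that is a sublattice (preserving bounds) of $M\times M$. For an ideal $I$, $\nabla_I=\{(x,y)\mid x\vee i=y\vee i\text{ for some }i\in I\}$, the congruence generated by $\{(0,i)\mid i\in I\}$. A $\kappa$-frame $L$ is d-reduced if $\mathfrak{D}_L=\{(a,b)\mid\forall x\in L:\ a\wedge x=0\iff b\wedge x=0\}$ is the diagonal. The pseudocomplement $J^*$ of an ideal $J$ is the largest ideal $K$ with $K\cap J=\{0\}$. *)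

(* Defs.v *)
From Stdlib Require Import Arith.

Definition nset := nat -> Prop.

Definition seteq (A B : nset) : Prop := forall k, A k <-> B k.
Definition subset (A B : nset) : Prop := forall k, A k -> B k.
Definition set0 : nset := fun _ => False.
Definition setT : nset := fun _ => True.
Definition set1 (n : nat) : nset := fun k => k = n.
Definition setU (A B : nset) : nset := fun k => A k \/ B k.
Definition setI (A B : nset) : nset := fun k => A k /\ B k.

Definition finite_set (A : nset) : Prop := exists n, forall k, A k -> k < n.

Definition inM (A : nset) : Prop := finite_set A \/ seteq A setT.

(* d-reducedness of a bounded lattice presented by a carrier predicate P,
   an equality relation eqv, a meet and a bottom: the relation
   D = {(a,b) | forall x, a /\ x = 0 <-> b /\ x = 0} is the diagonal. *)
Definition d_reduced {T : Type} (P : T -> Prop) (eqv : T -> T -> Prop)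
  (meet : T -> T -> T) (bot : T) : Prop :=
  forall a b, P a -> P b ->
    (forall x, P x -> (eqv (meet a x) bot <-> eqv (meet b x) bot)) ->
    eqv a b.

Definition is_ideal (J : nset -> Prop) : Prop :=
  (forall S, J S -> inM S) /\
  (exists S, J S) /\
  (forall S T, J S -> inM T -> subset T S -> J T) /\
  (forall S T, J S -> J T -> J (setU S T)).

Definition down (a : nset) : nset -> Prop := fun S => inM S /\ subset S a.

Definition meets_trivially (K J : nset -> Prop) : Prop :=
  forall S, K S -> J S -> seteq S set0.

Definition is_pseudocomplement (J K : nset -> Prop) : Prop :=
  is_ideal K /\ meets_trivially K J /\
  (forall K', is_ideal K' -> meets_trivially K' J -> forall S, K' S -> K S).

Definition nabla (I : nset -> Prop) (x y : nset) : Prop :=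
  exists i, I i /\ seteq (setU x i) (setU y i).

(* order on the quotient M / nabla_I : [a] <= [b] iff [a \/ b] = [b] *)
Definition qle (I : nset -> Prop) (a b : nset) : Prop := nabla I (setU a b) b.

Definition I2 : nset -> Prop := fun S => inM S /\ ~ S 2.

(* Main.v *)
Require Import Defs.
From Stdlib Require Import Arith Lia Classical.

Lemma inM_U A B : inM A -> inM B -> inM (setU A B).
Proof.
  unfold inM, finite_set, seteq, setU, setT.
  intros [[n Hn]|HA] [[m Hm]|HB].
  - left; exists (n+m); intros k [h|h]; [apply Hn in h|apply Hm in h]; lia.
  - right; intro k; split; auto; intros _; right; apply HB; auto.
  - right; intro k; split; auto; intros _; left; apply HA; auto.
  - right; intro k; split; auto; intros _; left; apply HA; auto.
Qed.

Lemma inM_I A B : inM A -> inM B -> inM (setI A B).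
Proof.
  unfold inM, finite_set, seteq, setI, setT.
  intros [[n Hn]|HA] [[m Hm]|HB].
  - left; exists n; intros k [h _]; auto.
  - left; exists n; intros k [h _]; auto.
  - left; exists m; intros k [_ h]; auto.
  - right; intro k; split; auto; intros _; split; [apply HA|apply HB]; auto.
Qed.

Lemma no_cofinite i : I2 i -> ~ (forall k, k <> 2 -> i k).
Proof.
  intros [[[n Hn]|HT] H2] H.
  - assert (h := H (n+3) ltac:(lia)); apply Hn in h; lia.
  - apply H2, HT; exact I.
Qed.

Lemma not_2_T : ~ nabla I2 (set1 2) setT.
Proof.
  intros [i [Hi E]]. apply (no_cofinite i Hi). intros k hk.
  destruct (proj2 (E k) (or_introl I)) as [h|h]; [unfold set1 in h; lia|auto].
Qed.

Theorem mainTheorem15 :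
  (* M is a bounded sublattice of the powerset (a bounded distributive lattice) *)
  (inM set0 /\ inM setT /\
   (forall A B, inM A -> inM B -> inM (setU A B) /\ inM (setI A B))) /\
  (* M is d-reduced *)
  d_reduced inM seteq setI set0 /\
  (* I is an ideal of M, equal to the pseudocomplement of the principal ideal of {2} *)
  is_ideal I2 /\
  is_pseudocomplement (down (set1 2)) I2 /\
  (* M / nabla_I has exactly the three elements [0] < [{2}] < [N] *)
  (forall a, inM a -> nabla I2 a set0 \/ nabla I2 a (set1 2) \/ nabla I2 a setT) /\
  ~ nabla I2 set0 (set1 2) /\ ~ nabla I2 (set1 2) setT /\ ~ nabla I2 set0 setT /\
  qle I2 set0 (set1 2) /\ qle I2 (set1 2) setT /\
  (* hence M / nabla_I is not d-reduced *)
  ~ d_reduced inM (nabla I2) setI set0.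
Proof.
  assert (M0 : inM set0) by (left; exists 0; intros k []).
  assert (MT : inM setT) by (right; intro k; tauto).
  assert (M1 : forall n, inM (set1 n)) by
    (intro n; left; exists (S n); unfold set1; intros; lia).
  assert (I0 : I2 set0) by (split; auto).
  split; [split; [auto|split; [auto|intros; split; auto using inM_U, inM_I]]|].
  split.
  { intros a b Ha Hb H k. specialize (H (set1 k) (M1 k)).
    unfold seteq, setI, set1, set0 in *.
    split; intro h; apply NNPP; intro nh.
    - assert (R : forall j, b j /\ j = k <-> False)
        by (intro j; split; [intros [x e]; subst; auto | intros []]).
      apply (proj1 (proj2 H R k)); auto.
    - assert (R : forall j, a j /\ j = k <-> False)
        by (intro j; split; [intros [x e]; subst; auto | intros []]).
      apply (proj1 (proj1 H R k)); auto. }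
  split.
  { split; [intros S []; auto|]. split; [exists set0; auto|]. split.
    - intros S T [HS h2] HT sub; split; auto.
    - intros S T [HS h2] [HT h2']; split.
      + apply inM_U; auto.
      + intros [x|x]; auto. }
  split.
  { split.
    - split; [intros S []; auto|]. split; [exists set0; auto|]. split.
      + intros S T [HS h2] HT sub; split; auto.
      + intros S T [HS h2] [HT h2']; split.
        * apply inM_U; auto.
        * intros [x|x]; auto.
    - split.
      + intros S [HS h2] [_ sub] k; unfold set0; split; [|intros []].
        intro h; assert (e := sub k h); unfold set1 in e; subst; auto.
      + intros K' [Kin [_ [Kdown _]]] Ktriv S HS. split; auto.
        intro h2. assert (K1 : K' (set1 2)).
        { apply (Kdown S); auto. unfold set1; intros k e; subst; auto. }
        assert (E := Ktriv _ K1 (conj (M1 2) (fun k h => h)) 2).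
        apply E; reflexivity. }
  split.
  { intros a Ha. destruct (classic (a 2)) as [h|h].
    - destruct Ha as [[n Hn]|HT].
      + right; left. exists (fun k => a k /\ k <> 2). split.
        * split; [left; exists n; intros k [x _]; auto| intros [_ x]; auto].
        * intro k; unfold setU, set1; split.
          { intro x; destruct (Nat.eq_dec k 2); [left|right]; tauto. }
          { intros [e|[x _]]; [left; subst|left]; auto. }
      + right; right. exists set0; split; auto.
        intro k; unfold setU, setT, set0; split; [tauto|intros _; left; apply HT; exact I].
    - left. exists a. split; [split; auto|].
      intro k; unfold setU, set0; tauto. }
  split.
  { intros [i [[_ Hi] E]]. apply Hi. destruct (proj2 (E 2) (or_introl eq_refl)) as [[]|x]; auto. }
  split; [apply not_2_T|].
  split.
  { intros [i [Hi E]]. apply (no_cofinite i Hi). intros k hk.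
    destruct (proj2 (E k) (or_introl I)) as [[]|h]; auto. }
  split.
  { exists set0; split; auto. intro k; unfold setU, set0, set1; tauto. }
  split.
  { exists set0; split; auto. intro k; unfold setU, set0, set1, setT; tauto. }
  intro D. apply not_2_T. apply D; auto.
  intros x Hx.
  assert (Hn0 : forall y, nabla I2 y set0 -> ~ y 2 -> True) by auto.
  assert (Key : forall y, (forall k, y k -> x k) -> (y 2 <-> x 2) -> nabla I2 y set0 -> ~ x 2).
  { intros y sub e [i [[_ Hi] E]] h2. apply Hi.
    destruct (proj1 (E 2) (or_introl (proj2 e h2))) as [[]|z]; auto. }
  assert (Build : ~ x 2 -> nabla I2 (setI setT x) set0 /\ nabla I2 (setI (set1 2) x) set0).
  { intro h2. split.
    - exists x. split; [split; auto|]. intro k; unfold setU, setI, setT, set0; tauto.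
    - exists set0. split; auto. intro k; unfold setU, setI, set1, set0; split; [|tauto].
      intros [[e y]|[]]; subst; contradiction. }
  split; intro H.
  - apply Build. eapply (Key _ _ _ H). Unshelve.
    + intros k [_ y]; auto.
    + unfold setI, set1; tauto.
  - apply Build. eapply (Key _ _ _ H). Unshelve.
    + intros k [_ y]; auto.
    + unfold setI, setT; tauto.
Qed.
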